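(* Let $F=f+\mu c$ with $\mu>0$, where $c:\mathbb{R}^n\to\mathbb{R}$ is convex and $f:\mathbb{R}^n\to\mathbb{R}$ is continuously differentiable with $L$-Lipschitz gradient and strongly convex with constant $L'>0$ (i.e. $(\nabla f(x)-\nabla f(y))^T(x-y)\ge L'\|x-y\|^2$). Let $\{x_k\}$ be generated by $x_{k+1}=x_k+\alpha_kd_k$, where $d_k=\mathscr{P}_c(x_k-\tau_k\nabla f(x_k),\mu\tau_k)-x_k\ne0$ with $0<\tau_{\min}\le\tau_k\le\tau_{\max}<\infty$, and where, for a fixed $\theta>0$ and every $k$, the step size $\alpha_k\in(0,1]$ satisfies $\nu(\alpha_k)|1-\lambda(\alpha_k)|\ge\theta$ and $F_{k+1}-R_k\ge-\frac{\alpha_k^2}{2}L\|d_k\|^2+\alpha_k\Delta_k$. Suppose $x_k\to x^*$, a minimizer of $F$. Then there exist constants $q\in(0,1)$ and $\xi_1,\xi_2,\xi_3>0$ such that for all $k$ $$F_k-F(x^* )\le\xi_1q^{2k},\qquad \|x_k-x^*\|\le\xi_2q^k,\qquad \|d_k\|\le\xi_3q^k .$$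
   Context: Notation: $h_k=h(x_k)$, $\nabla h_k=\nabla h(x_k)$; $\mathscr{P}_c(x,\vartheta)=\operatorname{argmin}_y\{\vartheta c(y)+\frac12\|x-y\|^2\}$ for $\vartheta>0$. $\Delta_k=d_k^T\nabla f_k+\mu(c(x_k+d_k)-c_k)$. Reference value: for an integer $N>0$, $m(0)=0$, $0\le m(k)\le\min\{m(k-1)+1,N-1\}$, $F_{l(k)}=\max_{0\le j\le m(k)}F_{k-j}$, and $R_k=\eta_kF_{l(k)}+(1-\eta_k)F_k$ with $\eta_k\in[0,1]$. Goldstein quotients: $\nu(\alpha_k)=\frac{F_{k+1}-F_k}{\alpha_k\Delta_k}$ and $\lambda(\alpha_k)=\frac{F_{k+1}-R_k}{\alpha_k\Delta_k}$. *)

(* Defs.v *)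
From HB Require Import structures.
From mathcomp Require Import all_boot all_order all_algebra.
From mathcomp Require Import all_classical all_reals all_analysis.
Set Implicit Arguments. Unset Strict Implicit. Unset Printing Implicit Defensive.
Import Order.TTheory GRing.Theory Num.Theory.
Import numFieldNormedType.Exports.
Local Open Scope ring_scope.

Section Defs.
Variables (R : realType) (n : nat).
Local Notation V := 'rV[R]_n.

Definition dotv (u v : V) : R := \sum_(i < n) u ord0 i * v ord0 i.
Definition enorm (u : V) : R := Num.sqrt (dotv u u).

Definition is_gradient (f : V -> R) (g : V -> V) : Prop :=
  forall x, differentiable f x /\ forall h, ('d f x : V -> R) h = dotv (g x) h.

Definition convex_fun (c : V -> R) : Prop :=
  forall (x y : V) (t : R), 0 <= t <= 1 ->
    c (t *: x + (1 - t) *: y) <= t * c x + (1 - t) * c y.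

(* p is an element of P_c(x, th) = argmin_y { th c(y) + 1/2 ||x - y||^2 } *)
Definition is_prox (c : V -> R) (x : V) (th : R) (p : V) : Prop :=
  forall y, th * c p + enorm (x - p) ^+ 2 / 2 <= th * c y + enorm (x - y) ^+ 2 / 2.

(* F_{l(k)} = max_{0 <= j <= m(k)} F_{k-j} *)
Definition Fmax (Fs : nat -> R) (m : nat -> nat) (k : nat) : R :=
  \big[Num.max/Fs k]_(j < (m k).+1) Fs (k - j)%N.

(* R_k = eta_k F_{l(k)} + (1 - eta_k) F_k *)
Definition refval (Fs : nat -> R) (m : nat -> nat) (eta : nat -> R) (k : nat) : R :=
  eta k * Fmax Fs m k + (1 - eta k) * Fs k.

End Defs.

(* Main.v *)
Require Import Defs.
From HB Require Import structures.
From mathcomp Require Import all_boot all_order all_algebra.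
From mathcomp Require Import all_classical all_reals all_analysis.
From mathcomp Require Import ring lra.
Import Order.TTheory GRing.Theory Num.Theory.
Import numFieldNormedType.Exports.
Local Open Scope classical_set_scope.
Local Open Scope ring_scope.
Set Implicit Arguments. Unset Strict Implicit. Unset Printing Implicit Defensive.
Section A.
Variables (R : realType) (n : nat).
Local Notation V := 'rV[R]_n.

Lemma line_deriv (f : V -> R) (g : V -> V) (x h : V) (t : R) :
  is_gradient f g ->
  is_derive t 1 (fun s : R => f (x + s *: h)) (dotv (g (x + t *: h)) h).
Proof.
move=> Hg.
pose l := fun s : R => x + s *: h.
have el : l = cst x + (fun s : R => s *: h) by apply/funext => s.
have dl : differentiable l t.
  rewrite el; apply: differentiableD; first exact: differentiable_cst.
  exact: (@differentiableZl _ _ _ (fun s => s) h t).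
have d1 : differentiable (cst x : R -> V) t := differentiable_cst _ _.
have d2 : differentiable ( *:%R^~ h : R -> V) t.
  exact: (@differentiableZl _ _ _ (fun s => s) h t).
have dl1 : 'd l t 1 = h.
  rewrite el diffD //.
  have H0 := @diff_cst R R V x t.
  have A : 'd (cst x) t 1 = 0 :> V by rewrite H0.
  have B : 'd ( *:%R^~ h) t 1 = h.
    rewrite (@diffZl _ _ _ (fun s => s) h t) //.
    by rewrite diff_val scale1r.
  exact: (etrans (congr2 +%R A B) (add0r h)).
have [dfx dfv] := Hg (l t).
have dc : differentiable (f \o l) t by apply: differentiable_comp.
have := derivableP (@diff_derivable _ _ _ _ _ (1:R) dc).
rewrite deriveE //.
have E : 'd (f \o l) t 1 = dotv (g (l t)) h.
  rewrite diff_comp //.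
  exact: (etrans (congr1 ('d f (l t)) dl1) (dfv h)).
move=> H; exact: (is_derive_eq H E).
Qed.
Lemma mvt_grad (f : V -> R) (g : V -> V) (x h : V) :
  is_gradient f g ->
  exists2 s : R, 0 < s < 1 & f (x + h) - f x = dotv (g (x + s *: h)) h.
Proof.
move=> Hg.
pose phi := fun s : R => f (x + s *: h).
have Hd : forall t : R, is_derive t (1:R) phi (dotv (g (x + t *: h)) h).
  by move=> t; apply: line_deriv.
have Hc : {within `[0, 1], continuous phi}.
  apply: continuous_subspaceT => t.
  apply: differentiable_continuous; apply/derivable1_diffP.
  by have [] := Hd t.
have [s Hs E] := MVT (ltr01) (fun t _ => Hd t) Hc.
exists s; first by move: Hs; rewrite in_itv /= => /andP[-> ->].
move: E; rewrite /phi scale1r scale0r addr0 subr0 mulr1 => ->; done.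
Qed.
End A.
Section B.
Variables (R : realType) (n : nat).
Local Notation V := 'rV[R]_n.
Local Notation dv := (@dotv R n).

Lemma dotvC (u v : V) : dv u v = dv v u.
Proof. by apply: eq_bigr => i _; rewrite mulrC. Qed.
Lemma dotvDl (u v w : V) : dv (u + v) w = dv u w + dv v w.
Proof. by rewrite /dotv -big_split; apply: eq_bigr => i _; rewrite !mxE mulrDl. Qed.
Lemma dotvDr (u v w : V) : dv w (u + v) = dv w u + dv w v.
Proof. by rewrite dotvC dotvDl !(dotvC w). Qed.
Lemma dotvZl (a : R) (u w : V) : dv (a *: u) w = a * dv u w.
Proof. by rewrite /dotv mulr_sumr; apply: eq_bigr => i _; rewrite !mxE mulrA. Qed.
Lemma dotvZr (a : R) (u w : V) : dv w (a *: u) = a * dv w u.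
Proof. by rewrite dotvC dotvZl dotvC. Qed.
Lemma dotvNl (u w : V) : dv (- u) w = - dv u w.
Proof. by rewrite -scaleN1r dotvZl mulN1r. Qed.
Lemma dotvNr (u w : V) : dv w (- u) = - dv w u.
Proof. by rewrite dotvC dotvNl dotvC. Qed.
Lemma dotvBl (u v w : V) : dv (u - v) w = dv u w - dv v w.
Proof. by rewrite dotvDl dotvNl. Qed.
Lemma dotvBr (u v w : V) : dv w (u - v) = dv w u - dv w v.
Proof. by rewrite dotvDr dotvNr. Qed.
Lemma dotv0l (w : V) : dv 0 w = 0.
Proof. by rewrite -(scale0r (0:V)) dotvZl mul0r. Qed.

Definition dotvE := (dotvDl, dotvDr, dotvBl, dotvBr, dotvNl, dotvNr, dotvZl, dotvZr).

Lemma dotv_ge0 (u : V) : 0 <= dv u u.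
Proof. by apply: sumr_ge0 => i _; rewrite -expr2 sqr_ge0. Qed.

Lemma dotv_gt0 (u : V) : u != 0 -> 0 < dv u u.
Proof.
move=> u0; rewrite lt_def dotv_ge0 andbT; apply: contra u0 => /eqP H.
have Hi := @psumr_eq0P _ 'I_n xpredT (fun i => u ord0 i * u ord0 i)
  (fun i _ => ltac:(by rewrite /= -expr2 sqr_ge0)) H.
apply/eqP/rowP => i; rewrite mxE.
by have := Hi i isT; move/eqP; rewrite mulf_eq0 orbb => /eqP.
Qed.

Lemma enorm_sq (u : V) : enorm u ^+ 2 = dv u u.
Proof. by rewrite /enorm sqr_sqrtr // dotv_ge0. Qed.

Lemma young (s : R) (u v : V) : 0 < s ->
  2 * dv u v <= s * dv u u + dv v v / s.
Proof.
move=> s0; have := dotv_ge0 (s *: u - v).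
rewrite !dotvE (dotvC v u) => H.
rewrite -(ler_pM2l s0) mulrDr (mulrC s (dv v v / s)) divfK ?gt_eqF //.
nra.
Qed.
End B.

Lemma lim_lemma (R : realType) (a b : R) :
  (forall t, 0 < t <= 1 -> 0 <= t * a + t ^+ 2 * b) -> 0 <= a.
Proof.
move=> H; rewrite leNgt; apply/negP => a0.
have [b0|b0] := lerP b 0.
  have := H 1 (ltac:(by rewrite ltr01 lexx)); rewrite expr1n !mul1r; lra.
pose t := Num.min 1 (- a / (2 * b)).
have t0 : 0 < t by rewrite lt_min ltr01 /= divr_gt0 // ?oppr_gt0 // mulr_gt0.
have t1 : t <= 1 by rewrite ge_min lexx.
have tb : t * b <= - a / 2.
  have : t <= - a / (2 * b) by rewrite ge_min lexx orbT.
  rewrite ler_pdivlMr ?mulr_gt0 // => h.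
  rewrite ler_pdivlMr //; nra.
have := H t; rewrite t0 t1 /= => /(_ isT).
rewrite expr2; nra.
Qed.

Section C.
Variables (R : realType) (n : nat).
Local Notation V := 'rV[R]_n.
Local Notation dv := (@dotv R n).
Variables (f : V -> R) (g : V -> V) (L1 L' : R).
Hypothesis Hg : is_gradient f g.
Hypothesis L1pos : 0 < L1.
Hypothesis Lip : forall y z, dv (g y - g z) (g y - g z) <= L1 ^+ 2 * dv (y - z) (y - z).
Hypothesis Sc : forall y z, L' * dv (y - z) (y - z) <= dv (g y - g z) (y - z).
Hypothesis L'pos : 0 < L'.

Lemma lip_inner (y z h : V) (s : R) : 0 < s ->
  2 * dv (g y - g z) h <= s * (L1 ^+ 2 * dv (y - z) (y - z)) + dv h h / s.
Proof.
move=> s0; apply: le_trans (young (g y - g z) h s0) _.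
by rewrite lerD2r ler_pM2l // Lip.
Qed.

Lemma addKv (x h : V) : x + h - x = h.
Proof. by rewrite addrC addKr. Qed.

Lemma descent (x h : V) : f (x + h) - f x <= dv (g x) h + L1 * dv h h.
Proof.
have [s /andP[s0 s1] ->] := mvt_grad x h Hg.
have E : dv (g (x + s *: h)) h = dv (g x) h + dv (g (x + s *: h) - g x) h.
  by rewrite dotvBl; ring.
rewrite E lerD2l.
have := @lip_inner (x + s *: h) x h L1^-1 (ltac:(by rewrite invr_gt0)).
rewrite addKv !dotvZl !dotvZr invrK.
have hh := dotv_ge0 h.
have : s * (s * dv h h) <= dv h h.
  by rewrite mulrA -[X in _ <= X]mul1r ler_wpM2r //; nra.
move=> H1 H2.
have : L1^-1 * (L1 ^+ 2 * (s * (s * dv h h))) <= L1 * dv h h.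
  by rewrite expr2 !mulrA mulVf ?gt_eqF // mul1r -!mulrA ler_pM2l.
move=> H3; rewrite (mulrC (dv h h)) in H2; lra.
Qed.

Lemma convex_lb (y z : V) : dv (g z) (y - z) <= f y - f z.
Proof.
have [s /andP[s0 s1] E] := mvt_grad z (y - z) Hg.
have Ey : z + (y - z) = y by rewrite addrC subrK.
rewrite Ey in E; rewrite E.
have H := Sc (z + s *: (y - z)) z; rewrite addKv !dotvZl !dotvZr in H.
have hh := dotv_ge0 (y - z).
have : 0 <= s * dv (g (z + s *: (y - z)) - g z) (y - z).
  apply: le_trans H; apply: mulr_ge0; first exact: ltW.
  by apply: mulr_ge0; [exact: ltW|apply: mulr_ge0; [exact: ltW|]].
rewrite pmulr_rge0 // dotvBl; lra.
Qed.

Lemma qgrowth (y z : V) :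
  dv (g z) (y - z) + L' / 4 * dv (y - z) (y - z) <= f y - f z.
Proof.
pose m := 2^-1 *: (y + z).
have e1 : y - m = 2^-1 *: (y - z).
  by apply/rowP => i; rewrite !mxE; field.
have e2 : m - z = 2^-1 *: (y - z).
  by apply/rowP => i; rewrite !mxE; field.
have h1 := convex_lb y m; have h2 := convex_lb m z; have h3 := Sc m z.
rewrite e1 in h1; rewrite e2 in h2 h3.
rewrite !dotvZl !dotvZr !dotvBl in h1 h2 h3.
have -> : f y - f z = (f y - f m) + (f m - f z) by ring.
rewrite dotvBl; lra.
Qed.

Lemma opt_cond (c : V -> R) (mu : R) (xs : V) : convex_fun c -> 0 <= mu ->
  (forall y, f xs + mu * c xs <= f y + mu * c y) ->
  forall h, 0 <= dv (g xs) h + mu * (c (xs + h) - c xs).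
Proof.
move=> Cc mu0 Hmin h; apply: (lim_lemma (b := L1 * dv h h)) => t /andP[t0 t1].
have H1 := Hmin (xs + t *: h).
have H2 := descent xs (t *: h); rewrite !dotvZl !dotvZr in H2.
have E : xs + t *: h = t *: (xs + h) + (1 - t) *: xs.
  by apply/rowP => i; rewrite !mxE; ring.
have Cy := Cc (xs + h) xs t; rewrite ltW // t1 -E in Cy; have {}Cy := Cy isT.
have H3 : mu * c (xs + t *: h) <= mu * (t * c (xs + h) + (1 - t) * c xs).
  by rewrite ler_wpM2l.
rewrite expr2; nra.
Qed.

End C.

Lemma dotv_sqB (R : realType) (n : nat) (u v : 'rV[R]_n) (t : R) :
  dotv (u - t *: v) (u - t *: v) = dotv u u - 2 * t * dotv u v + t ^+ 2 * dotv v v.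
Proof. rewrite !(dotvBl, dotvBr, dotvZl, dotvZr) (dotvC v u); ring. Qed.

Lemma prox_var (R : realType) (n : nat) (c : 'rV[R]_n -> R) (z p w : 'rV[R]_n) (th : R) :
  convex_fun c -> 0 <= th -> is_prox c z th p ->
  dotv (z - p) (w - p) <= th * (c w - c p).
Proof.
move=> Cc th0 Hp; rewrite -subr_ge0.
apply: (lim_lemma (b := dotv (w - p) (w - p) / 2)) => t /andP[t0 t1].
pose y := t *: w + (1 - t) *: p.
have := Hp y; rewrite /y !enorm_sq.
have -> : z - (t *: w + (1 - t) *: p) = (z - p) - t *: (w - p).
  by apply/rowP => i; rewrite !mxE; ring.
rewrite dotv_sqB => H1.
have Cy := Cc w p t; rewrite ltW //= t1 in Cy; have {}Cy := Cy isT.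
have H2 : th * c (t *: w + (1 - t) *: p) <= th * (t * c w + (1 - t) * c p).
  by rewrite ler_wpM2l.
nra.
Qed.

Lemma ls_lemma (R : realType) (A P Q alpha D Nd tmax L1 theta : R) :
  0 < alpha <= 1 -> D < 0 -> A = alpha * D -> Nd <= tmax * (- D) ->
  0 < L1 -> 0 < tmax -> 0 < theta ->
  Q <= P -> P <= A + alpha ^+ 2 * L1 * Nd -> A - alpha ^+ 2 / 2 * L1 * Nd <= Q ->
  theta <= P / A * `|1 - Q / A| ->
  Q <= theta / (1 + theta) * (theta / ((1 + L1 * tmax) * (L1 * tmax))) * D.
Proof.
move=> /andP[a0 a1] D0 EA HNd L0 t0 th0 QP PA AQ H.
set K := L1 * tmax.
have K0 : 0 < K by rewrite mulr_gt0.
have A0 : A < 0 by rewrite EA pmulr_rlt0.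
have A0' : A != 0 by rewrite lt_eqF.
set nu := P / A in H; set la := Q / A in H.
have EP : P = nu * A by rewrite /nu divfK.
have EQ : Q = la * A by rewrite /la divfK.
have h1 : nu <= la.
  by rewrite -(ler_nM2r A0) -EP -EQ.
have aD : 0 < alpha * - D by rewrite mulr_gt0 // oppr_gt0.
have LN : alpha ^+ 2 * L1 * Nd <= alpha * K * (alpha * - D).
  have : L1 * Nd <= L1 * (tmax * - D) by rewrite ler_pM2l.
  rewrite /K expr2 => h; nra.
have h2 : 1 - nu <= alpha * K.
  rewrite -(ler_pM2r aD).
  have : (1 - nu) * (alpha * - D) = nu * A - A by rewrite EA; ring.
  move=> ->; rewrite -EP; lra.
have h3 : la - 1 <= alpha * K.
  rewrite -(ler_pM2r aD).
  have : (la - 1) * (alpha * - D) = A - la * A by rewrite EA; ring.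
  move=> ->; rewrite -EQ.
  have : 0 <= alpha ^+ 2 * L1 * Nd by lra.
  lra.
have nu0 : 0 < nu.
  rewrite ltNge; apply/negP => hn.
  have hn2 := normr_ge0 (1 - la).
  have : nu * `|1 - la| <= 0 by nra.
  lra.
have s1 : theta / (1 + theta) <= theta.
  by rewrite ler_pdivrMr; [nra|lra].
have s2 : theta / (1 + theta) <= 1.
  by rewrite ler_pdivrMr; lra.
have key : theta / (1 + theta) <= la /\ theta <= alpha * ((1 + K) * K).
  have [hl|hl] := lerP la 1.
    move: H; rewrite ger0_norm ?subr_ge0 // => H.
    have e1 : nu * (1 - la) <= 1 - la by rewrite ler_piMl ?subr_ge0 //; lra.
    have e2 : nu * (1 - la) <= nu by rewrite ler_piMr ?le0r ?nu0 ?orbT //; lra.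
    split; first by lra.
    have : alpha * K <= alpha * ((1 + K) * K).
      by rewrite ler_pM2l // ler_peMl ?ltW //; lra.
    lra.
  move: H; rewrite ltr0_norm ?subr_lt0 // opprB => H.
  split; first by lra.
  have e1 : nu <= 1 + K.
    have : alpha * K <= K by rewrite ler_piMl // ltW.
    lra.
  have e2 : nu * (la - 1) <= (1 + K) * (alpha * K).
    apply: ler_pM; lra.
  nra.
case: key => k1 k2.
have am : theta / ((1 + K) * K) <= alpha.
  have pos : 0 < (1 + K) * K by apply: mulr_gt0; lra.
  by rewrite ler_pdivrMr.
rewrite EQ EA mulrA ler_nM2r //.
apply: ler_pM => //.
- by apply: divr_ge0; lra.
- by apply: divr_ge0; [lra|apply: mulr_ge0; lra].
Qed.

Lemma bernoulli (R : realType) (a : R) (N : nat) : 0 <= a <= 1 ->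
  1 - N%:R * a <= (1 - a) ^+ N.
Proof.
move=> /andP[a0 a1]; elim: N => [|N IH]; first by rewrite mul0r subr0 expr0.
rewrite exprS.
have hN : 0 <= N%:R :> R := ler0n _ _.
have h : 0 <= (1 - a) ^+ N by apply: exprn_ge0; lra.
have [hn|hn] := lerP 0 (1 - N%:R * a).
  apply: le_trans (_ : (1 - a) * (1 - N%:R * a) <= _).
    rewrite -natr1; nra.
  by rewrite ler_wpM2l // subr_ge0.
apply: le_trans (_ : 0 <= _); last by rewrite mulr_ge0 // subr_ge0.
rewrite -natr1; nra.
Qed.

Lemma sqrt_bound (R : realType) (a b y : R) : 0 <= b -> 0 <= y ->
  a <= b * y ^+ 2 -> Num.sqrt a <= Num.sqrt b * y.
Proof.
move=> b0 y0 H.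
have : Num.sqrt a <= Num.sqrt (b * y ^+ 2) by rewrite ler_sqrt // mulr_ge0 // sqr_ge0.
by rewrite sqrtrM // sqrtr_sqr ger0_norm.
Qed.

Lemma bigmax_ge (R : realType) (F : nat -> R) (a : R) (r : nat) :
  a <= \big[Num.max/a]_(j < r) F j.
Proof. by elim/big_rec: _ => // j v _ h; rewrite le_max h orbT. Qed.

Lemma bigmax_le (R : realType) (F : nat -> R) (a B : R) (r : nat) :
  a <= B -> (forall j, (j < r)%N -> F j <= B) -> \big[Num.max/a]_(j < r) F j <= B.
Proof.
move=> aB H; elim/big_rec: _ => // j v _ h.
by rewrite ge_max h andbT H.
Qed.

Unset Implicit Arguments.

Theorem theorem3 (R : realType) (n : nat)
  (f c : 'rV[R]_n -> R) (gf : 'rV[R]_n -> 'rV[R]_n) (mu L L' : R)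
  (x d : nat -> 'rV[R]_n) (alpha tau eta : nat -> R) (tau_min tau_max theta : R)
  (N : nat) (m : nat -> nat) (xstar : 'rV[R]_n) :
  let F := fun y => f y + mu * c y in
  let Fs := fun k => F (x k) in
  let Delta := fun k => dotv (d k) (gf (x k)) + mu * (c (x k + d k) - c (x k)) in
  let Rk := refval Fs m eta in
  let nu := fun k => (Fs k.+1 - Fs k) / (alpha k * Delta k) in
  let lam := fun k => (Fs k.+1 - Rk k) / (alpha k * Delta k) in
  0 < mu ->
  convex_fun c ->
  is_gradient f gf ->
  continuous gf ->
  (forall y z, enorm (gf y - gf z) <= L * enorm (y - z)) ->
  0 < L' ->
  (forall y z, dotv (gf y - gf z) (y - z) >= L' * enorm (y - z) ^+ 2) ->
  (0 < N)%N -> m 0%N = 0%N ->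
  (forall k, (m k.+1 <= minn (m k).+1 (N - 1))%N) ->
  (forall k, 0 <= eta k <= 1) ->
  0 < tau_min -> tau_min <= tau_max ->
  (forall k, tau_min <= tau k <= tau_max) ->
  (forall k, is_prox c (x k - tau k *: gf (x k)) (mu * tau k) (x k + d k)) ->
  (forall k, d k != 0) ->
  (forall k, x k.+1 = x k + alpha k *: d k) ->
  0 < theta ->
  (forall k, 0 < alpha k <= 1) ->
  (forall k, nu k * `|1 - lam k| >= theta) ->
  (forall k, Fs k.+1 - Rk k >= - (alpha k ^+ 2 / 2) * L * enorm (d k) ^+ 2
                               + alpha k * Delta k) ->
  x @ \oo --> xstar ->
  (forall y, F xstar <= F y) ->
  exists q xi1 xi2 xi3 : R,
    [/\ 0 < q < 1, 0 < xi1, 0 < xi2, 0 < xi3 &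
     forall k, [/\ Fs k - F xstar <= xi1 * q ^+ (2 * k),
                   enorm (x k - xstar) <= xi2 * q ^+ k &
                   enorm (d k) <= xi3 * q ^+ k]].
Proof.
move=> F Fs Delta Rk nu lam Hmu Cc Hg _ Lip HL' Sc HN Hm0 Hm Heta Htmin Htmm Htau
  Hprox Hd Hx Hth Halpha Hls1 Hls2 _ Hmin.
set L1 := `|L| + 1.
have L1pos : 0 < L1 by have := normr_ge0 L; rewrite /L1; lra.
have LL1 : L <= L1 by have := ler_norm L; rewrite /L1; lra.
have Lip2 : forall y z, dotv (gf y - gf z) (gf y - gf z) <= L1 ^+ 2 * dotv (y - z) (y - z).
  move=> y z; rewrite -!enorm_sq.
  have a0 : 0 <= enorm (gf y - gf z) by apply: sqrtr_ge0.
  have b0 : 0 <= enorm (y - z) by apply: sqrtr_ge0.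
  have h1 := Lip y z.
  have h2 : L * enorm (y - z) <= L1 * enorm (y - z) by rewrite ler_wpM2r.
  rewrite -exprMn !expr2; nra.
have Sc2 : forall y z, L' * dotv (y - z) (y - z) <= dotv (gf y - gf z) (y - z).
  by move=> y z; have := Sc y z; rewrite enorm_sq.
have tmax0 : 0 < tau_max by lra.
have Ht : forall k, 0 < tau k /\ tau_min <= tau k /\ tau k <= tau_max.
  by move=> k; have /andP[h1 h2] := Htau k; split; [lra|].
have HNd : forall k, 0 < dotv (d k) (d k) by move=> k; apply: dotv_gt0.
have Fmin : forall y, F xstar <= F y by [].
have Hdelta : forall k, tau k * Delta k <= - dotv (d k) (d k).
  move=> k; have [t0 _] := Ht k.
  have := prox_var (x k) Cc (mulr_ge0 (ltW Hmu) (ltW t0)) (Hprox k).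
  have -> : x k - tau k *: gf (x k) - (x k + d k) = - (tau k *: gf (x k) + d k).
    by apply/rowP => i; rewrite !mxE; ring.
  have -> : x k - (x k + d k) = - d k by apply/rowP => i; rewrite !mxE; ring.
  rewrite dotvNl dotvNr opprK dotvDl dotvZl (dotvC (gf (x k))) => H.
  rewrite /Delta; nra.
have HDneg : forall k, Delta k < 0.
  move=> k; have [t0 _] := Ht k; have h := Hdelta k; have h2 := HNd k.
  rewrite ltNge; apply/negP => h3.
  have : 0 <= tau k * Delta k by rewrite mulr_ge0 // ltW.
  lra.
have HNdD : forall k, dotv (d k) (d k) <= tau_max * - Delta k.
  move=> k; have [t0 [_ t2]] := Ht k; have h := Hdelta k; have h2 := HDneg k.
  have : tau k * - Delta k <= tau_max * - Delta k by rewrite ler_wpM2r // oppr_ge0 ltW.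
  lra.
have Hdesc : forall k, Fs k.+1 - Fs k <=
    alpha k * Delta k + alpha k ^+ 2 * L1 * dotv (d k) (d k).
  move=> k; have /andP[a0 a1] := Halpha k.
  rewrite /Fs /F Hx.
  have H1 := descent Hg L1pos Lip2 (x k) (alpha k *: d k).
  rewrite !dotvZl !dotvZr in H1.
  have E : x k + alpha k *: d k = alpha k *: (x k + d k) + (1 - alpha k) *: x k.
    by apply/rowP => i; rewrite !mxE; ring.
  have Cy := Cc (x k + d k) (x k) (alpha k); rewrite ltW // a1 -E in Cy.
  have {}Cy := Cy isT.
  have H3 : mu * c (x k + alpha k *: d k) <= mu * (alpha k * c (x k + d k) + (1 - alpha k) * c (x k)).
    by rewrite ler_wpM2l // ltW.
  rewrite /Delta (dotvC (d k)) expr2; nra.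
have HRk : forall k, Fs k <= Rk k /\ Rk k <= Fmax Fs m k.
  move=> k; have /andP[e0 e1] := Heta k.
  have h : Fs k <= Fmax Fs m k := bigmax_ge (fun j => Fs (k - j)%N) (Fs k) (m k).+1.
  rewrite /Rk /refval; split; nra.
set K := L1 * tau_max.
set kap := theta / (1 + theta) * (theta / ((1 + K) * K)).
have Hls : forall k, Fs k.+1 - Rk k <= kap * Delta k.
  move=> k; have [h1 h2] := HRk k.
  apply: (@ls_lemma R (alpha k * Delta k) (Fs k.+1 - Fs k) _ (alpha k) (Delta k)
     (dotv (d k) (d k)) tau_max L1 theta) => //.
  - lra.
  - have := Hls2 k; rewrite enorm_sq => h.
    have : alpha k ^+ 2 / 2 * L * dotv (d k) (d k) <= alpha k ^+ 2 / 2 * L1 * dotv (d k) (d k).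
      apply: ler_wpM2r; first exact: ltW (HNd k).
      apply: ler_wpM2l => //; apply: divr_ge0 => //; apply: sqr_ge0.
    move=> h3; lra.
  - exact: Hls1 k.
have HQG : forall k, L' / 4 * dotv (x k - xstar) (x k - xstar) <= Fs k - F xstar.
  move=> k.
  have h1 := qgrowth Hg Sc2 HL' (x k) xstar.
  have h2 := opt_cond Hg L1pos Lip2 Cc (ltW Hmu) Hmin (x k - xstar).
  have E : xstar + (x k - xstar) = x k by rewrite addrC subrK.
  rewrite E in h2.
  rewrite /Fs /F; lra.
have Hpx : forall k, tau k * dotv (gf (x k)) (x k - xstar) + tau k * dotv (gf (x k)) (d k)
    + dotv (d k) (x k - xstar) + dotv (d k) (d k)
    <= mu * tau k * (c xstar - c (x k + d k)).
  move=> k; have [t0 _] := Ht k.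
  have := prox_var xstar Cc (mulr_ge0 (ltW Hmu) (ltW t0)) (Hprox k).
  have -> : x k - tau k *: gf (x k) - (x k + d k) = - (tau k *: gf (x k) + d k).
    by apply/rowP => i; rewrite !mxE; ring.
  have -> : xstar - (x k + d k) = - ((x k - xstar) + d k).
    by apply/rowP => i; rewrite !mxE; ring.
  rewrite dotvNl dotvNr opprK !dotvDl !dotvDr !dotvZl; lra.
set wmin := (L' * tau_min)^-1.
set Cst := 2 + 4 * wmin.
have Herr : forall k, Fs k - F xstar <= Cst * - Delta k.
  move=> k; have [t0 [t1 t2]] := Ht k.
  have H1 := Hpx k.
  have H2 := convex_lb Hg Sc2 HL' xstar (x k).
  have E3 : xstar - x k = - (x k - xstar) by rewrite opprB.
  rewrite E3 dotvNr in H2.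
  have H2' : tau k * - dotv (gf (x k)) (x k - xstar) <= tau k * (f xstar - f (x k)).
    by rewrite ler_wpM2l // ltW.
  have A1 : tau k * (F xstar - Fs k) >= tau k * Delta k + dotv (d k) (x k - xstar)
      + dotv (d k) (d k).
    rewrite /Fs /F /Delta (dotvC (d k)); nra.
  have LT : 0 < L' * tau k / 4 by rewrite divr_gt0 // mulr_gt0.
  have H4 := young (x k - xstar) (- d k) LT.
  rewrite dotvNr dotvNl dotvNr opprK in H4.
  set w := (L' * tau k)^-1.
  have E4 : dotv (d k) (d k) / (L' * tau k / 4) = 4 * w * dotv (d k) (d k).
    by rewrite /w; field; apply/andP; split; apply: lt0r_neq0.
  rewrite E4 (dotvC (x k - xstar)) in H4.
  have A3 : L' * tau k / 4 * dotv (x k - xstar) (x k - xstar) <= tau k * (Fs k - F xstar).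
    have := HQG k => h.
    have : tau k * (L' / 4 * dotv (x k - xstar) (x k - xstar)) <= tau k * (Fs k - F xstar).
      by rewrite ler_wpM2l // ltW.
    have -> : tau k * (L' / 4 * dotv (x k - xstar) (x k - xstar)) =
       L' * tau k / 4 * dotv (x k - xstar) (x k - xstar) by ring.
    done.
  have w0 : 0 <= w by rewrite /w invr_ge0 ltW // mulr_gt0.
  have ww : w <= wmin.
    rewrite /w /wmin lef_pV2 ?posrE ?mulr_gt0 //.
    by rewrite ler_wpM2l // ltW.
  have D0 := HDneg k.
  have A4 : w * dotv (d k) (d k) <= wmin * (tau k * - Delta k).
    apply: le_trans (_ : w * (tau k * - Delta k) <= _).
      by rewrite ler_wpM2l //; have := Hdelta k; lra.
    rewrite ler_wpM2r // mulr_ge0 //; lra.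
  have A5 : tau k * (Fs k - F xstar) <= tau k * (Cst * - Delta k).
    have e1 : tau k * (Cst * - Delta k) = - 2 * (tau k * Delta k) + 4 * (wmin * (tau k * - Delta k)).
      by rewrite /Cst; ring.
    have e2 : tau k * (F xstar - Fs k) = - (tau k * (Fs k - F xstar)) by ring.
    have e3 : 4 * w * dotv (d k) (d k) = 4 * (w * dotv (d k) (d k)) by ring.
    rewrite e1; rewrite e2 in A1; rewrite e3 in H4.
    have := HNd k; lra.
  by move: A5; rewrite ler_pM2l.
set K2 := 2 * (1 + 2 * tau_max ^+ 2 * L1 ^+ 2).
have Hdb : forall k, dotv (d k) (d k) <= K2 * dotv (x k - xstar) (x k - xstar).
  move=> k; have [t0 [t1 t2]] := Ht k.
  have H1 := Hpx k.
  have H2 := opt_cond Hg L1pos Lip2 Cc (ltW Hmu) Hmin ((x k - xstar) + d k).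
  have E : xstar + (x k - xstar + d k) = x k + d k.
    by apply/rowP => i; rewrite !mxE; ring.
  rewrite E (dotvDr (x k - xstar) (d k)) in H2.
  have H2' : 0 <= tau k * (dotv (gf xstar) (x k - xstar) + dotv (gf xstar) (d k)
      + mu * (c (x k + d k) - c xstar)).
    by apply: mulr_ge0; [exact: ltW|exact: H2].
  have H3 := Sc2 (x k) xstar; rewrite dotvBl in H3.
  have Nex0 := dotv_ge0 (x k - xstar).
  have H3' : 0 <= tau k * (dotv (gf (x k)) (x k - xstar) - dotv (gf xstar) (x k - xstar)).
    apply: mulr_ge0; [exact: ltW|]; have : 0 <= L' * dotv (x k - xstar) (x k - xstar) by rewrite mulr_ge0 // ltW.
    lra.
  have H4 := young (x k - xstar) (- d k) (ltr0Sn R 1).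
  rewrite dotvNr dotvNl dotvNr opprK in H4.
  have T4 : 4 * tau k > 0 by rewrite mulr_gt0.
  have H5 := lip_inner Lip2 xstar (x k) (d k) T4.
  have E3 : xstar - x k = - (x k - xstar) by rewrite opprB.
  rewrite E3 dotvNl dotvNr opprK dotvBl in H5.
  have H5' : tau k * (2 * (dotv (gf xstar) (d k) - dotv (gf (x k)) (d k))) <=
     tau k * (4 * tau k * (L1 ^+ 2 * dotv (x k - xstar) (x k - xstar)) + dotv (d k) (d k) / (4 * tau k)).
    by rewrite ler_wpM2l // ltW.
  have E5 : tau k * (4 * tau k * (L1 ^+ 2 * dotv (x k - xstar) (x k - xstar)) + dotv (d k) (d k) / (4 * tau k))
     = 4 * (tau k ^+ 2 * (L1 ^+ 2 * dotv (x k - xstar) (x k - xstar))) + dotv (d k) (d k) / 4.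
    by field; apply: lt0r_neq0.
  rewrite E5 in H5'.
  have H6 : tau k ^+ 2 * (L1 ^+ 2 * dotv (x k - xstar) (x k - xstar)) <=
     tau_max ^+ 2 * (L1 ^+ 2 * dotv (x k - xstar) (x k - xstar)).
    apply: ler_wpM2r; first by rewrite mulr_ge0 // sqr_ge0.
    rewrite !expr2; nra.
  have e1 : K2 * dotv (x k - xstar) (x k - xstar) = 2 * dotv (x k - xstar) (x k - xstar)
     + 4 * (tau_max ^+ 2 * (L1 ^+ 2 * dotv (x k - xstar) (x k - xstar))) by rewrite /K2; ring.
  rewrite e1 (dotvC (x k - xstar) (d k)) in H4 *.
  have e2 : mu * tau k * (c xstar - c (x k + d k)) = - (tau k * (mu * (c (x k + d k) - c xstar))) by ring.
  rewrite e2 in H1.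
  rewrite !mulrDr in H2' H3' H5'.
  have e4 : 1 / 2 = 2^-1 :> R by rewrite div1r.
  have := HNd k.
  have : 4 * (tau_max ^+ 2 * (L1 ^+ 2 * dotv (x k - xstar) (x k - xstar))) >= 0.
    by rewrite mulr_ge0 // mulr_ge0 ?sqr_ge0 // mulr_ge0 ?sqr_ge0.
  have := H6; have := HNd k.
  have T0 : 0 <= tau k ^+ 2 * (L1 ^+ 2 * dotv (x k - xstar) (x k - xstar)).
    by rewrite mulr_ge0 ?sqr_ge0 // mulr_ge0 ?sqr_ge0.
  move=> *; nra.
have kap0 : 0 < kap.
  have K0 : 0 < K by rewrite mulr_gt0.
  rewrite /kap; apply: mulr_gt0; apply: divr_gt0 => //; [lra|apply: mulr_gt0; lra].
set B := Cst + L1 * tau_max.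
have wmin0 : 0 < wmin by rewrite /wmin invr_gt0 mulr_gt0.
have B0 : 0 < B.
  rewrite /B /Cst; have : 0 < L1 * tau_max by rewrite mulr_gt0.
  lra.
have kB : 0 < kap + B by apply: addr_gt0.
set rho := B / (kap + B).
have He0 : forall k, 0 <= Fs k - F xstar by move=> k; rewrite subr_ge0; apply: Hmin.
have Hstep : forall k, Fs k.+1 - F xstar <= rho * (Fmax Fs m k - F xstar).
  move=> k; have [h1 h2] := HRk k.
  have a := Hls k; have b := Hdesc k; have e := Herr k.
  have D0 := HDneg k; have N1 := HNdD k.
  have /andP[a0 a1] := Halpha k.
  have c1 : alpha k * Delta k <= 0 by rewrite pmulr_rle0 // ltW.
  have c2 : alpha k ^+ 2 * L1 * dotv (d k) (d k) <= L1 * dotv (d k) (d k).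
    rewrite -mulrA; apply: ler_piMl.
      by apply: mulr_ge0; apply: ltW => //; apply: HNd.
    rewrite expr2; nra.
  have c3 : L1 * dotv (d k) (d k) <= L1 * (tau_max * - Delta k) by rewrite ler_pM2l.
  have u1 : Fs k.+1 - F xstar <= B * - Delta k.
    have -> : B * - Delta k = Cst * - Delta k + L1 * (tau_max * - Delta k) by rewrite /B; ring.
    lra.
  have u2 : Fs k.+1 - F xstar <= Fmax Fs m k - F xstar + kap * Delta k by lra.
  rewrite /rho mulrC mulrA ler_pdivlMr //.
  have v1 : kap * (Fs k.+1 - F xstar) <= kap * (B * - Delta k) by rewrite ler_pM2l.
  have v2 : B * (Fs k.+1 - F xstar) <= B * (Fmax Fs m k - F xstar + kap * Delta k) by rewrite ler_pM2l.
  have -> : (Fs k.+1 - F xstar) * (kap + B) = kap * (Fs k.+1 - F xstar) + B * (Fs k.+1 - F xstar) by ring.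
  have -> : (Fmax Fs m k - F xstar) * B = B * (Fmax Fs m k - F xstar + kap * Delta k) + kap * (B * - Delta k) by ring.
  lra.
have rho0 : 0 < rho by apply: divr_gt0.
have rho1 : rho < 1.
  rewrite /rho ltr_pdivrMr // -subr_gt0.
  by have -> : 1 * (kap + B) - B = kap by ring.

have HmN : forall k, (m k <= k)%N && (m k < N)%N.
  elim => [|kk /andP[h1 h2]]; first by rewrite Hm0 HN.
  have := Hm kk; rewrite leq_min => /andP[a b].
  apply/andP; split; first by apply: leq_trans a _; rewrite ltnS.
  by apply: leq_ltn_trans b _; rewrite subn1 ltn_predL.
have N0 : 0 < N%:R :> R by rewrite ltr0n.
have N1 : 1 <= N%:R :> R by rewrite ler1n.
set a := (1 - rho) / N%:R.
have a0 : 0 < a by apply: divr_gt0; lra.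
have a1 : a <= 1 - rho by rewrite /a ler_pdivrMr //; nra.
set r := 1 - a.
have r0 : 0 < r by rewrite /r; lra.
have r1 : r < 1 by rewrite /r; lra.
have rN : rho <= r ^+ N.
  have := bernoulli N (ltac:(apply/andP; split; lra) : 0 <= a <= 1).
  have -> : N%:R * a = 1 - rho by rewrite /a mulrC divfK // lt0r_neq0.
  rewrite /r; lra.

set E0 := Fs 0 - F xstar.
have E00 : 0 <= E0 by apply: He0.
have Hrate0 : forall k j, (j <= k)%N -> Fs j - F xstar <= E0 * r ^+ j.
  elim => [|k IH] j hj.
    by move: hj; rewrite leqn0 => /eqP ->; rewrite expr0 mulr1.
  move: hj; rewrite leq_eqVlt => /orP[/eqP -> | hj]; last exact: IH j hj.
  have S := Hstep k.
  have /andP[hk hN'] := HmN k.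
  have HB : forall i, (i <= m k)%N -> rho * (Fs (k - i)%N - F xstar) <= E0 * r ^+ k.+1.
    move=> i hi.
    have hik : (i <= k)%N := leq_trans hi hk.
    have hiN : (i.+1 <= N)%N := leq_ltn_trans hi hN'.
    have h := IH (k - i)%N (leq_subr i k).
    have h2 : rho * (Fs (k - i)%N - F xstar) <= rho * (E0 * r ^+ (k - i)).
      by rewrite ler_wpM2l // ltW.
    apply: le_trans h2 _.
    have p1 : r ^+ N <= r ^+ i.+1.
      rewrite -(subnKC hiN) exprD; apply: ler_piMr.
        exact: exprn_ge0 (ltW r0).
      exact: exprn_ile1 (ltW r0) (ltW r1).
    have p2 : r ^+ k.+1 = r ^+ i.+1 * r ^+ (k - i).
      by rewrite -exprD addSn subnKC.
    rewrite p2 mulrCA ler_wpM2l //.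
    apply: le_trans (_ : r ^+ N * r ^+ (k - i) <= _).
      by rewrite ler_wpM2r // exprn_ge0 // ltW.
    by rewrite ler_wpM2r // exprn_ge0 // ltW.
  have HF : Fmax Fs m k <= F xstar + E0 * r ^+ k.+1 / rho.
    rewrite /Fmax; apply: (@bigmax_le R (fun j => Fs (k - j)%N)).
      have := HB 0%N (leq0n _); rewrite subn0 => h.
      rewrite -lerBlDl ler_pdivlMr // mulrC; exact: h.
    move=> i hi; have := HB i hi => h.
    rewrite -lerBlDl ler_pdivlMr // mulrC; exact: h.
  apply: le_trans S _.
  have e : rho * (E0 * r ^+ k.+1 / rho) = E0 * r ^+ k.+1.
    by field; apply: lt0r_neq0.
  rewrite -e; apply: ler_wpM2l; first exact: ltW.
  lra.
have Hrate : forall k, Fs k - F xstar <= E0 * r ^+ k.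
  by move=> kk; exact: (Hrate0 _ _ (leqnn kk)).
set q := Num.sqrt r.
have q0 : 0 < q by rewrite /q sqrtr_gt0.
have qr : q ^+ 2 = r by rewrite /q sqr_sqrtr // ltW.
have q1 : q < 1.
  rewrite ltNge; apply/negP => h.
  have : 1 <= q ^+ 2 by rewrite expr2; nra.
  rewrite qr; lra.
have K2pos : 0 < K2.
  rewrite /K2; apply: mulr_gt0 => //.
  have : 0 <= 2 * tau_max ^+ 2 * L1 ^+ 2 by rewrite mulr_ge0 ?sqr_ge0 // mulr_ge0 ?sqr_ge0.
  lra.
set xi1 := E0 + 1.
have xi10 : 0 < xi1 by rewrite /xi1; lra.
have c4 : 0 < 4 / L' * xi1 by apply: mulr_gt0 => //; apply: divr_gt0.
exists q, xi1, (Num.sqrt (4 / L' * xi1)), (Num.sqrt (K2 * (4 / L' * xi1))); split.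
- by rewrite q0 q1.
- exact: xi10.
- by rewrite sqrtr_gt0.
- by rewrite sqrtr_gt0; apply: mulr_gt0.
move=> k.
have qk : (q ^+ k) ^+ 2 = r ^+ k by rewrite -exprM mulnC exprM qr.
have rk : 0 <= r ^+ k by rewrite exprn_ge0 // ltW.
have Fk : Fs k - F xstar <= xi1 * (q ^+ k) ^+ 2.
  rewrite qk; apply: le_trans (Hrate k) _.
  by rewrite ler_wpM2r // /xi1 lerDl.
have Nk : dotv (x k - xstar) (x k - xstar) <= 4 / L' * xi1 * (q ^+ k) ^+ 2.
  have h := HQG k.
  have : dotv (x k - xstar) (x k - xstar) <= 4 / L' * (Fs k - F xstar).
    have -> : 4 / L' * (Fs k - F xstar) = (4 * (Fs k - F xstar)) / L' by ring.
    rewrite ler_pdivlMr //.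
    have -> : dotv (x k - xstar) (x k - xstar) * L' = 4 * (L' / 4 * dotv (x k - xstar) (x k - xstar)) by field.
    by rewrite ler_pM2l.
  move=> h2; apply: le_trans h2 _.
  have c5 : 0 <= 4 / L' by apply: divr_ge0; lra.
  by rewrite -[X in _ <= X]mulrA; apply: ler_wpM2l.
split.
- by rewrite mulnC exprM.
- rewrite /enorm; apply: sqrt_bound; [exact: ltW|exact: exprn_ge0 (ltW q0)|exact: Nk].
- rewrite /enorm; apply: sqrt_bound; [exact: ltW (mulr_gt0 K2pos c4)|exact: exprn_ge0 (ltW q0)|].
  apply: le_trans (Hdb k) _.
  by rewrite -[X in _ <= X]mulrA; apply: ler_wpM2l => //; exact: ltW K2pos.
Qed.
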